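(* Let $p>2$ be a prime, $d\geq 2$ an integer with $d\mid p-1$, $f=(p-1)/d$, and $\omega$ a fixed generator of $\mathbb{F}_p^*$. Let $\theta=0$ if $f$ is even and $\theta=d/2$ if $f$ is odd. Let $\zeta\in\mathbb{C}$ be a primitive $p$-th root of unity and, for $i\in\mathbb{Z}/d\mathbb{Z}$, let $\eta_i=\sum_{k=0}^{f-1}\zeta^{\omega^{kd+i}}$ be the Gauss periods. For $i,j\in\mathbb{Z}/d\mathbb{Z}$ let $(i,j)=\#\{(u,v):0\leq u,v\leq f-1,\ 1+\omega^{du+i}\equiv\omega^{dv+j}\pmod p\}$ be the cyclotomic numbers of order $d$. For integers $k\geq 0$ and $0\leq\nu\leq d-1$ put $n(k,\nu)=\sum_{i=0}^{d-1}\eta_i^k\,\eta_{i+\nu}$ (indices mod $d$). Then $n(0,\nu)=-1$, $n(1,\nu)=p\,\delta_{\theta\nu}-f$, and for all $0\leq\nu\leq d-1$ and $k\geq 1$, \[ n(k+1,\nu)=\sum_{l=0}^{d-1}(\nu,l)\,n(k,l)+f\,\delta_{\theta\nu}\,n(k-1,0), \] where $\delta$ denotes the Kronecker delta.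
   Context: Indices of $\eta_i$ and of the cyclotomic numbers $(i,j)$ are taken modulo $d$. $\omega^{m}$ in the exponent of $\zeta$ is interpreted via any integer representative of $\omega^m\in\mathbb{F}_p$. *)

(* Defs.v *)
From mathcomp Require Import all_boot all_order all_algebra all_field.
Unset Printing Implicit Defensive.
Import GRing.Theory Num.Theory.
Local Open Scope ring_scope.

(* Gauss period eta_i = sum_{k=0}^{f-1} zeta^(omega^(k d + i)); the exponent
   omega^m in 'F_p is interpreted via its canonical representative in [0,p). *)
Definition gauss_period (p d f : nat) (omega : 'F_p) (zeta : algC) (i : nat) : algC :=
  \sum_(k < f) zeta ^+ (nat_of_ord (omega ^+ (k * d + i)%N)).

Definition cyclo_num (p d f : nat) (omega : 'F_p) (i j : nat) : nat :=
  #|[set uv : 'I_f * 'I_f |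
      1 + omega ^+ (d * uv.1 + i)%N == omega ^+ (d * uv.2 + j)%N]|.

Definition nkv (p d f : nat) (omega : 'F_p) (zeta : algC) (k nu : nat) : algC :=
  \sum_(i < d) gauss_period p d f omega zeta i ^+ k * gauss_period p d f omega zeta (i + nu)%N.

Definition theta (d f : nat) : nat := (if odd f then d %/ 2 else 0)%N.

Definition kdelta (a b : nat) : algC := (a == b)%:R.

(* Main.v *)
Require Import Defs.
From mathcomp Require Import all_boot all_order all_algebra all_field.
From mathcomp Require Import zify ring.
Import GRing.Theory Num.Theory.
Local Open Scope ring_scope.

Lemma rot_sum (g : nat -> algC) (n s : nat) :
  (forall i, g (i + n)%N = g i) -> \sum_(i < n) g (i + s)%N = \sum_(i < n) g i.
Proof.
move=> gP; elim: s => [|s IH]; first by apply: eq_bigr => i _; rewrite addn0.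
rewrite -IH; case: n gP {IH} => [|n] gP; first by rewrite !big_ord0.
rewrite big_ord_recr [in RHS]big_ord_recl /=.
have -> : g (n + s.+1)%N = g (0 + s)%N by rewrite -addSnnS addnC gP.
rewrite addrC; congr (_ + _); apply: eq_bigr => i _.
by rewrite /bump /= add1n addnS addSn.
Qed.

Lemma eD (p : nat) (zeta : algC) (x y : 'F_p) : prime p -> p.-primitive_root zeta ->
  zeta ^+ (nat_of_ord (x + y)) = zeta ^+ x * zeta ^+ y.
Proof.
move=> pr pz; rewrite -exprD.
have H : forall q a, q = p -> zeta ^+ (a %% q) = zeta ^+ a.
  by move=> q a ->; exact: prim_expr_mod.
by rewrite /= H // Fp_cast.
Qed.

Lemma e0 (p : nat) (zeta : algC) : zeta ^+ (nat_of_ord (0 : 'F_p)) = 1.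
Proof. by rewrite expr0. Qed.

Lemma sum_e (p : nat) (zeta : algC) : prime p -> p.-primitive_root zeta ->
  \sum_(x : 'F_p) zeta ^+ x = 0.
Proof.
move=> pr pz; set S := \sum_(x : 'F_p) _.
have e1 : zeta ^+ (nat_of_ord (1 : 'F_p)) = zeta.
  have H : forall q a, q = p -> zeta ^+ (a %% q) = zeta ^+ a.
    by move=> q a ->; exact: prim_expr_mod.
  by rewrite /= H ?Fp_cast // expr1.
have : S = zeta * S.
  rewrite {1}/S (reindex_inj (addrI 1)) mulr_sumr; apply: eq_bigr => x _.
  rewrite eD // e1 //.

move/eqP; rewrite -subr_eq0 -{1}(mul1r S) -mulrBl mulf_eq0 => /orP[|/eqP //].
rewrite subr_eq0 => /eqP z1; have := eq_prim_root_expr pz 1 0.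
rewrite expr1 expr0 z1 eqxx mod0n modn_small //.
exact: prime_gt1.
Qed.

Lemma sum_e_nz (p : nat) (zeta : algC) : prime p -> p.-primitive_root zeta ->
  \sum_(x : 'F_p | x != 0) zeta ^+ x = -1.
Proof.
move=> pr pz; have := sum_e p zeta pr pz; rewrite (bigD1 0) //= expr0 => /eqP.
by rewrite addrC addr_eq0 => /eqP.
Qed.

Lemma divmod_eq (d a b m : nat) : (b < d)%N ->
  ((d * a + b == m) = (b == m %% d) && (a == m %/ d))%N.
Proof.
move=> bd; have d0 : (0 < d)%N by case: d bd.
apply/eqP/andP => [<-|[/eqP -> /eqP ->]].
  by rewrite [(d * a)%N]mulnC modnMDl modn_small // divnMDl // divn_small // addn0 !eqxx.
by rewrite mulnC -divn_eq.
Qed.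

Lemma fiber (p d : nat) (w : 'F_p) : prime p -> (0 < d)%N -> (d %| p.-1)%N ->
  (p.-1).-primitive_root w -> forall x : 'F_p,
  #|[set z : 'I_d * 'I_(p.-1 %/ d) | w ^+ (d * z.2 + z.1) == x]| = (x != 0).
Proof.
move=> pr d0 dN wN x.
have Nf : p.-1 = (d * (p.-1 %/ d))%N by rewrite mulnC divnK.
have bound : forall z : 'I_d * 'I_(p.-1 %/ d), (d * z.2 + z.1 < p.-1)%N.
  move=> [a b] /=; rewrite [X in (_ < X)%N]Nf; have := ltn_ord a; have := ltn_ord b; nia.
have w0 : w != 0.
  apply/eqP => w0; have := prim_expr_order wN; rewrite w0 expr0n.
  by case: (p.-1) (prim_order_gt0 wN).
case: (x =P 0) => [->|/eqP xn0].
  apply/eqP; rewrite cards_eq0; apply/eqP/setP => z; rewrite !inE.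
  by rewrite expf_eq0 (negbTE w0) andbF.
have xN : x ^+ p.-1 = 1.
  have e := expf_card x; rewrite card_Fp // in e.
  by apply: (mulfI xn0); rewrite mulr1 -exprS prednK ?prime_gt0.
have [m xm] := prim_rootP wN xN.
have m1 : (m %% d < d)%N by rewrite ltn_pmod.
have m2 : (m %/ d < p.-1 %/ d)%N by rewrite ltn_divLR // divnK // ltn_ord.
rewrite (_ : [set _ | _] = [set (Ordinal m1, Ordinal m2)]) ?cards1 //.
apply/setP => z; rewrite !inE xm (eq_prim_root_expr wN) !modn_small ?bound //.
rewrite divmod_eq //; case: z => a b; rewrite xpair_eqE /=.
Qed.

Lemma half_theta (d f : nat) : (0 < d)%N -> ~~ odd (d * f) ->
  ((d * f)./2 = d * (f./2) + theta d f)%N.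
Proof.
move=> d0 ev. have hf := odd_double_half f. have hd := odd_double_half d.
have hdf := odd_double_half (d*f). rewrite /theta.
move: ev hf hd hdf; rewrite !oddM -!divn2.
case: (odd d); case: (odd f) => //= *; nia.
Qed.

Lemma theta_lt (d f : nat) : (0 < d)%N -> (theta d f < d)%N.
Proof. by move=> d0; rewrite /theta; case: (odd f) => //; lia. Qed.

Lemma negcount (p d : nat) (w : 'F_p) : prime p -> (2 < p)%N -> (0 < d)%N ->
  (d %| p.-1)%N -> (p.-1).-primitive_root w -> forall nu, (nu < d)%N ->
  #|[set a : 'I_(p.-1 %/ d) | 1 + w ^+ (d * a + nu) == 0]| =
  (theta d (p.-1 %/ d) == nu).
Proof.
move=> pr p2 d0 dN wN nu nud.
set f := (p.-1 %/ d)%N.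
have Nf : p.-1 = (d * f)%N by rewrite mulnC divnK.
have podd : odd p.
  by case/boolP: (odd p) => // /(prime_oddPn pr) p2q; rewrite p2q in p2.
have Nev : ~~ odd (d * f) by rewrite -Nf; case: p pr podd {p2 w wN dN Nf f} => [|p].
have ht := half_theta d f d0 Nev; rewrite -Nf in ht.
have tl := theta_lt d f d0.
have hlt : ((p.-1)./2 < p.-1)%N by rewrite -divn2 ltn_Pdiv //; lia.
have w2 : w ^+ (p.-1)./2 = -1.
  have : (w ^+ (p.-1)./2) ^+ 2 == 1.
    have E : ((p.-1)./2.*2 = p.-1)%N.
      by rewrite Nf; have := odd_double_half (d*f); rewrite (negbTE Nev) add0n.
    by rewrite -exprM muln2 E prim_expr_order.
  rewrite sqrf_eq1 => /orP[|/eqP //].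
  rewrite -(expr0 w) (eq_prim_root_expr wN) mod0n modn_small //.
  rewrite -divn2; lia.
have fl : ((p.-1)./2 %/ d < f)%N.
  by rewrite ltn_divLR // /f divnK.
have tm : theta d f = ((p.-1)./2 %% d)%N.
  by rewrite ht [(d * _)%N]mulnC modnMDl modn_small.
case: (boolP (theta d f == nu)) => [/eqP tn|tn].
  rewrite (_ : [set a : 'I_f | 1 + w ^+ (d * a + nu) == 0] = [set Ordinal fl]) ?cards1 //.
  apply/setP => a; rewrite !inE addrC addr_eq0 -w2 (eq_prim_root_expr wN).
  have al : (d * a + nu < p.-1)%N.
    rewrite Nf; have := ltn_ord a; nia.
  rewrite !modn_small // divmod_eq // -tm tn eqxx /=.
  by apply/eqP/eqP => [h|-> //]; apply: val_inj.
suff -> : [set a : 'I_f | 1 + w ^+ (d * a + nu) == 0] = set0 by rewrite cards0.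
apply/setP => a; rewrite !inE.
rewrite addrC addr_eq0 -w2 (eq_prim_root_expr wN).
have al : (d * a + nu < p.-1)%N.
  rewrite Nf; have := ltn_ord a; nia.
rewrite !modn_small // divmod_eq // -tm eq_sym (negbTE tn).
by [].
Qed.

Lemma card_sum (T : finType) (P : pred T) :
  (#|[set z | P z]|)%:R = \sum_z ((P z)%:R : algC).
Proof.
rewrite -sum1_card natr_sum big_mkcond /=; apply: eq_bigr => z _.
by rewrite inE; case: (P z).
Qed.

Lemma fiber_sum (T U : finType) (phi : T -> U) (g : U -> algC) :
  \sum_z g (phi z) = \sum_x g x * (#|[set z | phi z == x]|)%:R.
Proof.
under [RHS]eq_bigr => x _ do rewrite card_sum mulr_sumr.
rewrite exchange_big; apply: eq_bigr => z _.
rewrite (bigD1 (phi z)) //= eqxx mulr1 big1 ?addr0 // => x /negbTE.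
by rewrite eq_sym => ->; rewrite mulr0.
Qed.

Lemma eta_per (p d : nat) (w : 'F_p) (zeta : algC) i :
  (0 < d)%N -> (d %| p.-1)%N -> (p.-1).-primitive_root w ->
  gauss_period p d (p.-1 %/ d) w zeta (i + d) = gauss_period p d (p.-1 %/ d) w zeta i.
Proof.
move=> d0 dN wN; rewrite /gauss_period.
have := rot_sum (fun k => zeta ^+ (w ^+ (k * d + i))) (p.-1 %/ d) 1.
rewrite /= => <-.
  by apply: eq_bigr => k _; rewrite addn1 mulSn; congr (zeta ^+ (nat_of_ord (w ^+ _))); ring.
move=> k; rewrite mulnDl divnK // [(_ + p.-1)%N]addnC -addnA exprD.
by rewrite (prim_expr_order wN) mul1r.
Qed.

Lemma sum_eta (p d : nat) (w : 'F_p) (zeta : algC) l :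
  prime p -> (0 < d)%N -> (d %| p.-1)%N -> (p.-1).-primitive_root w ->
  p.-primitive_root zeta ->
  \sum_(i < d) gauss_period p d (p.-1 %/ d) w zeta (i + l) = -1.
Proof.
move=> pr d0 dN wN pz.
rewrite (rot_sum (fun i => gauss_period p d (p.-1 %/ d) w zeta i)); last first.
  by move=> i; rewrite eta_per.
rewrite /gauss_period.
rewrite (eq_bigr (fun i : 'I_d => \sum_(k < p.-1 %/ d) zeta ^+ (w ^+ (d * k + i)))); last first.
  by move=> i _; apply: eq_bigr => k _; rewrite mulnC.
rewrite pair_big /=.
rewrite (@fiber_sum _ _ (fun z : 'I_d * 'I_(p.-1 %/ d) => w ^+ (d * z.2 + z.1))
                   (fun x : 'F_p => zeta ^+ x)).
rewrite -(sum_e_nz p zeta pr pz) [RHS]big_mkcond /=; apply: eq_bigr => x _.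
by rewrite fiber //; case: (x != 0); rewrite ?mulr1 ?mulr0.
Qed.

Lemma prod_eta (p d : nat) (w : 'F_p) (zeta : algC) (i nu : nat) :
  prime p -> (0 < d)%N -> (d %| p.-1)%N -> (p.-1).-primitive_root w ->
  p.-primitive_root zeta ->
  gauss_period p d (p.-1 %/ d) w zeta i * gauss_period p d (p.-1 %/ d) w zeta (i + nu)
  = (p.-1 %/ d)%:R *
      (#|[set a : 'I_(p.-1 %/ d) | 1 + w ^+ (d * a + nu) == 0]|)%:R
    + \sum_(l < d) (cyclo_num p d (p.-1 %/ d) w nu l)%:R
                   * gauss_period p d (p.-1 %/ d) w zeta (i + l).
Proof.
move=> pr d0 dN wN pz.
set f := (p.-1 %/ d)%N.
set eta := gauss_period p d f w zeta.
set y := fun a : nat => 1 + w ^+ (d * a + nu).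
set S := fun a : nat => \sum_(u < f) zeta ^+ (nat_of_ord ((w ^+ (u * d + i) * y a) : 'F_p)).
have Nf : (f * d = p.-1)%N by rewrite divnK.
have wper : forall k c, w ^+ ((k + f) * d + c) = w ^+ (k * d + c).
  move=> k c; rewrite mulnDl Nf -addnA [(p.-1 + c)%N]addnC addnA exprD.
  by rewrite (prim_expr_order wN) mulr1.
have A : eta i * eta (i + nu)%N = \sum_(a < f) S a.
  rewrite /eta /gauss_period mulr_suml.
  rewrite (eq_bigr (fun u : 'I_f => \sum_(v < f) zeta ^+ (nat_of_ord ((w ^+ (u * d + i) * y v) : 'F_p)))); last first.
    move=> u _; rewrite mulr_sumr.
    rewrite -(rot_sum (fun v => zeta ^+ (w ^+ (u * d + i)) * zeta ^+ (w ^+ (v * d + (i + nu)))) f u); last first.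
      by move=> v; rewrite wper.
    apply: eq_bigr => v _; rewrite -eD //.
    rewrite (_ : y v = 1 + w ^+ (d * v + nu)) // mulrDr mulr1 -exprD.
    by rewrite (_ : (u * d + i + (d * v + nu) = (v + u) * d + (i + nu))%N) //; ring.
  by rewrite exchange_big.
have cyc : forall l : nat, ((cyclo_num p d f w nu l)%:R : algC) =
    \sum_(a < f) \sum_(b < f) ((y a == w ^+ (d * b + l))%:R : algC).
  by move=> l; rewrite /cyclo_num card_sum pair_big.
have key : forall (a b l : nat), y a = w ^+ (d * b + l) -> eta (i + l)%N = S a.
  move=> a b l ya; rewrite /eta /gauss_period /S.
  rewrite -(rot_sum (fun u => zeta ^+ (w ^+ (u * d + (i + l)))) f b); last first.
    by move=> v; rewrite wper.
  apply: eq_bigr => u _; rewrite ya -exprD.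
  by rewrite (_ : (u * d + i + (d * b + l) = (u + b) * d + (i + l))%N) //; ring.
have B : \sum_(l < d) (cyclo_num p d f w nu l)%:R * eta (i + l)%N
       = \sum_(a < f) S a * (y a != 0)%:R.
  transitivity (\sum_(l < d) \sum_(a < f) \sum_(b < f)
                   ((y a == w ^+ (d * b + l))%:R * S a)).
    apply: eq_bigr => l _; rewrite cyc mulr_suml; apply: eq_bigr => a _.
    rewrite mulr_suml; apply: eq_bigr => b _.
    by case: eqP => [/(key a b l) ->|_]; rewrite ?mul0r ?mul1r.
  rewrite exchange_big; apply: eq_bigr => a _.
  rewrite -(fiber p d w pr d0 dN wN (y a)) card_sum mulr_sumr pair_big /=.
  by apply: eq_bigr => z _; rewrite eq_sym mulrC.
have C : (f%:R * (#|[set a : 'I_f | 1 + w ^+ (d * a + nu) == 0]|)%:R : algC)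
       = \sum_(a < f) S a * (y a == 0)%:R.
  rewrite card_sum mulr_sumr; apply: eq_bigr => a _.
  rewrite /y; case: eqP => [ya0|_]; rewrite ?mulr0 ?mulr1 //.
  rewrite /S /y ya0; under eq_bigr do rewrite mulr0 e0.
  by rewrite sumr_const card_ord.
rewrite A C B -big_split; apply: eq_bigr => a _; rewrite /= -mulrDr.
by case: (y a == 0); rewrite /= ?addr0 ?add0r mulr1.
Qed.

Lemma cyc_sum (p d : nat) (w : 'F_p) (nu l : nat) :
  ((cyclo_num p d (p.-1 %/ d) w nu l)%:R : algC) =
  \sum_(a < p.-1 %/ d) \sum_(b < p.-1 %/ d)
     ((1 + w ^+ (d * a + nu) == w ^+ (d * b + l))%:R : algC).
Proof. by rewrite /cyclo_num card_sum pair_big. Qed.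

Lemma cyc_total (p d : nat) (w : 'F_p) (nu : nat) :
  prime p -> (0 < d)%N -> (d %| p.-1)%N -> (p.-1).-primitive_root w ->
  \sum_(l < d) ((cyclo_num p d (p.-1 %/ d) w nu l)%:R : algC)
  + (#|[set a : 'I_(p.-1 %/ d) | 1 + w ^+ (d * a + nu) == 0]|)%:R
  = (p.-1 %/ d)%:R.
Proof.
move=> pr d0 dN wN.
under eq_bigr do rewrite cyc_sum.
rewrite exchange_big card_sum -big_split /=.
have -> : ((p.-1 %/ d)%:R : algC) = \sum_(a < p.-1 %/ d) 1.
  by rewrite sumr_const card_ord.
apply: eq_bigr => a _.
rewrite pair_big /=.
rewrite (eq_bigr (fun z : 'I_d * 'I_(p.-1 %/ d) =>
   ((w ^+ (d * z.2 + z.1) == 1 + w ^+ (d * a + nu))%:R : algC))); last first.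
  by move=> z _; rewrite eq_sym.
rewrite -(card_sum _ (fun z : 'I_d * 'I_(p.-1 %/ d) => w ^+ (d * z.2 + z.1) == 1 + w ^+ (d * a + nu))).
rewrite (fiber p d w pr d0 dN wN).
by case: (1 + w ^+ (d * a + nu) == 0); rewrite /= ?addr0 ?add0r.
Qed.

Theorem lemma1 (p d : nat) (omega : 'F_p) (zeta : algC) :
  prime p -> (2 < p)%N -> (2 <= d)%N -> (d %| p.-1)%N ->
  (p.-1).-primitive_root omega ->
  p.-primitive_root zeta ->
  let f := (p.-1 %/ d)%N in
  let n := nkv p d f omega zeta in
  let th := theta d f in
  forall nu : nat, (nu < d)%N ->
    [/\ n 0%N nu = -1,
        n 1%N nu = p%:R * kdelta th nu - f%:R
      & forall k : nat, (1 <= k)%N ->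
          n k.+1 nu = \sum_(l < d) (cyclo_num p d f omega nu l)%:R * n k l
                      + f%:R * kdelta th nu * n k.-1 0%N].
Proof.
move=> pr p2 d2 dN wN pz f n th nu nud.
have d0 : (0 < d)%N by apply: leq_trans d2.
set eta := gauss_period p d f omega zeta.
set c := #|[set a : 'I_f | 1 + omega ^+ (d * a + nu) == 0]|.
have kd : kdelta th nu = c%:R by rewrite /kdelta /c negcount.
have prod : forall i, eta i * eta (i + nu)%N =
    f%:R * c%:R + \sum_(l < d) (cyclo_num p d f omega nu l)%:R * eta (i + l)%N.
  by move=> i; rewrite /eta /c prod_eta.
have s0 : forall l, \sum_(i < d) eta (i + l)%N = -1.
  by move=> l; rewrite /eta sum_eta.
have n0 : forall l, n 0%N l = -1.
  by move=> l; rewrite /n /nkv -(s0 l); apply: eq_bigr => i _; rewrite expr0 mul1r.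
split; first exact: n0.
  rewrite kd /n /nkv.
  under eq_bigr do rewrite expr1 prod.
  rewrite big_split /= sumr_const card_ord.
  rewrite exchange_big /=.
  under [X in _ + X = _]eq_bigr do rewrite -mulr_sumr s0 mulrN1.
  rewrite sumrN.
  have ct := cyc_total p d omega nu pr d0 dN wN; rewrite -/f -/c in ct.
  have pR : (p%:R : algC) = f%:R * d%:R + 1.
    have pE : (f * d + 1 = p)%N by rewrite divnK // addn1 prednK // prime_gt0.
    by rewrite -pE natrD natrM.
  by rewrite pR -ct -mulr_natr; ring.
move=> k k1.
rewrite kd /n /nkv.
rewrite -/eta.
under eq_bigr => i _ do rewrite exprS [eta i * _]mulrC -mulrA prod mulrDr.
rewrite big_split /= addrC; congr (_ + _).
  rewrite (eq_bigr (fun i : 'I_d => \sum_(l < d) (cyclo_num p d f omega nu l)%:R *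
            (eta i ^+ k * eta (i + l)%N))); last first.
    move=> i _; rewrite mulr_sumr; apply: eq_bigr => l _.
    by rewrite mulrA [_ * _%:R]mulrC -mulrA.
  by rewrite exchange_big /=; apply: eq_bigr => l _; rewrite mulr_sumr.
rewrite mulr_sumr; apply: eq_bigr => i _.
by rewrite addn0 mulrC -exprSr prednK.
Qed.
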